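(* Let $G,\Omega$ be domains in $\mathbb{C}$, let $K\subset K'$ be compact subsets of $G$, and let $\phi:G\to\Omega$ be holomorphic and injective on a neighbourhood of $K'$. If $K$ is $G$-convex and $\phi(K')$ is $\Omega$-convex, then $\phi(K)$ is $\Omega$-convex.
   Context: A hole of a set $E\subset\mathbb{C}$ is a non-empty bounded connected component of $\mathbb{C}\setminus E$. For an open set $\Omega$, a compact set $K\subset\Omega$ is $\Omega$-convex if every hole of $K$ contains a point of $\mathbb{C}\setminus\Omega$. *)

(* Defs.v *)
(* Stdlib reals + Coquelicot complex numbers C.
   Complex differentiability = Coquelicot's is_derive on C viewed as a
   normed module over the absolute-value ring C (limit over complex h). *)
From Stdlib Require Import Reals List.
From Coquelicot Require Import Coquelicot.
Open Scope R_scope.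

Definition Copen (D : C -> Prop) : Prop := @open C_UniformSpace D.

Definition Cconnected (S : C -> Prop) : Prop :=
  forall U V : C -> Prop, Copen U -> Copen V ->
    (forall z, S z -> U z \/ V z) ->
    (forall z, S z -> U z -> V z -> False) ->
    (exists z, S z /\ U z) -> (exists z, S z /\ V z) -> False.

Definition Cdomain (D : C -> Prop) : Prop :=
  Copen D /\ (exists z, D z) /\ Cconnected D.

Definition Cbounded (S : C -> Prop) : Prop :=
  exists M : R, forall z, S z -> Cmod z <= M.

Definition Ccompact (K : C -> Prop) : Prop :=
  forall (I : Type) (U : I -> C -> Prop),
    (forall i, Copen (U i)) ->
    (forall z, K z -> exists i, U i z) ->
    exists l : list I, forall z, K z -> exists i, In i l /\ U i z.

Definition component (A : C -> Prop) (x : C) : C -> Prop :=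
  fun y => exists S : C -> Prop, Cconnected S /\ (forall z, S z -> A z) /\ S x /\ S y.

Definition hole (E H : C -> Prop) : Prop :=
  (exists x, ~ E x /\ forall y, H y <-> component (fun z => ~ E z) x y) /\
  Cbounded H.

Definition Oconvex (Omega K : C -> Prop) : Prop :=
  Ccompact K /\ (forall z, K z -> Omega z) /\
  forall H, hole K H -> exists w, H w /\ ~ Omega w.

Definition holomorphic_on (f : C -> C) (U : C -> Prop) : Prop :=
  forall z, U z -> exists l : C, is_derive (K := C_AbsRing) (V := C_NormedModule) f z l.

Definition injective_on (f : C -> C) (U : C -> Prop) : Prop :=
  forall z w, U z -> U w -> f z = f w -> z = w.

Definition image (f : C -> C) (K : C -> Prop) : C -> Prop :=
  fun w => exists z, K z /\ w = f z.

(* Main.v *)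
Require Import Defs.
From Stdlib Require Import Reals List Lra Classical.
From Coquelicot Require Import Coquelicot.
Open Scope R_scope.
Notation B := (@ball C_UniformSpace).
Lemma Bdef (x y : C) e : B x e y <-> Rabs (fst y - fst x) < e /\ Rabs (snd y - snd x) < e.
Proof. destruct x, y. unfold ball; simpl. unfold prod_ball; simpl. unfold ball; simpl. unfold AbsRing_ball, abs, minus, plus, opp; simpl. tauto. Qed.

Lemma B_center (x : C) (e : posreal) : B x e x.
Proof. apply Bdef. destruct e as [e he]; simpl. rewrite !Rminus_diag, Rabs_R0. lra. Qed.

Lemma B_sym (x y : C) e : B x e y -> B y e x.
Proof. rewrite !Bdef. rewrite (Rabs_minus_sym (fst x)), (Rabs_minus_sym (snd x)). tauto. Qed.

Lemma B_tri (x y z : C) e1 e2 : B x e1 y -> B y e2 z -> B x (e1+e2) z.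
Proof. rewrite !Bdef. intros [h1 h2] [h3 h4].
 split.
 - replace (fst z - fst x) with ((fst z - fst y) + (fst y - fst x)) by ring.
   eapply Rle_lt_trans; [apply Rabs_triang|lra].
 - replace (snd z - snd x) with ((snd z - snd y) + (snd y - snd x)) by ring.
   eapply Rle_lt_trans; [apply Rabs_triang|lra].
Qed.

Lemma B_mono (x y : C) e1 e2 : e1 <= e2 -> B x e1 y -> B x e2 y.
Proof. rewrite !Bdef. lra. Qed.

Lemma cont (f : C -> C) z : ex_derive (K:=C_AbsRing)(V:=C_NormedModule) f z ->
  forall eps:posreal, exists d:posreal, forall y, B z d y -> B (f z) eps (f y).
Proof.
intros H eps. apply ex_derive_continuous in H.
unfold continuous, filterlim, filter_le, filtermap in H.
specialize (H (ball (f z) eps) (locally_ball _ _)).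
apply locally_C in H. exact H.
Qed.

Definition intr (P : C -> Prop) z := exists d : posreal, forall y, B z d y -> P y.

Lemma intr_open P : Copen (intr P).
Proof.
intros z [d Hd]. exists (pos_div_2 d). intros y Hy.
exists (pos_div_2 d). intros t Ht. apply Hd.
eapply B_mono; [|eapply B_tri; eauto]. simpl; lra.
Qed.

Lemma open_ball' (z : C) (e : posreal) : Copen (B z e).
Proof.
intros y Hy. destruct (proj1 (Bdef z y e) Hy) as [Hy1 Hy2].
assert (h : 0 < e - Rmax (Rabs (fst y - fst z)) (Rabs (snd y - snd z))).
{ unfold Rmax; destruct Rle_dec; lra. }
exists (mkposreal _ h). intros t Ht. destruct (proj1 (Bdef y t _) Ht) as [Ht1 Ht2]. simpl in Ht1, Ht2. apply Bdef.
pose proof (Rmax_l (Rabs (fst y - fst z)) (Rabs (snd y - snd z))).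
pose proof (Rmax_r (Rabs (fst y - fst z)) (Rabs (snd y - snd z))).
split.
 - replace (fst t - fst z) with ((fst t - fst y) + (fst y - fst z)) by ring.
   eapply Rle_lt_trans; [apply Rabs_triang|lra].
 - replace (snd t - snd z) with ((snd t - snd y) + (snd y - snd z)) by ring.
   eapply Rle_lt_trans; [apply Rabs_triang|lra].
Qed.

Lemma R_conn (P Q : R -> Prop) :
  (forall t, 0<=t<=1 -> P t \/ Q t) ->
  (forall t, 0<=t<=1 -> P t -> Q t -> False) ->
  (forall t, 0<=t<=1 -> P t -> exists d, 0 < d /\ forall s, Rabs (s-t) < d -> P s) ->
  (forall t, 0<=t<=1 -> Q t -> exists d, 0 < d /\ forall s, Rabs (s-t) < d -> Q s) ->
  P 0 -> Q 1 -> False.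
Proof.
intros Hc Hd HP HQ P0 Q1.
set (E := fun t => 0<=t<=1 /\ forall u, 0<=u<=t -> P u).
assert (bE : bound E). { exists 1. intros t [h _]. lra. }
assert (nE : exists x, E x). { exists 0. split; [lra|]. intros u hu. replace u with 0 by lra. exact P0. }
destruct (completeness E bE nE) as [s [Hub Hl]].
assert (s0 : 0 <= s). { apply Hub. destruct nE. unfold E. split; [lra|]. intros u hu. replace u with 0 by lra. exact P0. }
assert (s1 : s <= 1). { apply Hl. intros t [h _]. lra. }
assert (Hlt : forall u, 0 <= u < s -> P u).
{ intros u hu. destruct (classic (exists t, E t /\ u < t)) as [[t [[_ Et] ut]]|hn].
  - apply Et. lra.
  - exfalso. assert (s <= u). { apply Hl. intros t Et. destruct (Rle_dec t u); auto.
      exfalso; apply hn; exists t; split; auto; lra. } lra. }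
destruct (Hc s (conj s0 s1)) as [Ps|Qs].
- destruct (Req_dec s 1) as [e1|ne1].
  + subst s. apply (Hd 1); auto; lra.
  + destruct (HP s (conj s0 s1) Ps) as [d [dp Hdd]].
    set (t := Rmin 1 (s + d/2)).
    assert (Et : E t).
    { split. { unfold t, Rmin; destruct Rle_dec; lra. }
      intros u hu. destruct (Rlt_dec u s). apply Hlt; lra.
      apply Hdd. assert (u <= s + d/2) by (pose proof (Rmin_r 1 (s+d/2)); unfold t in hu; lra).
      rewrite Rabs_right; lra. }
    apply Hub in Et. unfold t in Et. revert Et. unfold Rmin; destruct Rle_dec; lra.
- destruct (Req_dec s 0) as [e0|ne0].
  + subst s. apply (Hd 0); auto; lra.
  + destruct (HQ s (conj s0 s1) Qs) as [d [dp Hdd]].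
    set (u := Rmax 0 (s - d/2)).
    assert (u0 : 0 <= u) by apply Rmax_l.
    assert (us : u < s) by (unfold u, Rmax; destruct Rle_dec; lra).
    apply (Hd u). lra. apply Hlt; lra. apply Hdd.
    assert (s - d/2 <= u) by apply Rmax_r. rewrite Rabs_left; lra.
Qed.

Lemma conv_lt t x y r : 0<=t<=1 -> Rabs x < r -> Rabs y < r -> Rabs ((1-t)*x + t*y) < r.
Proof.
intros ht hx hy. eapply Rle_lt_trans; [apply Rabs_triang|].
rewrite !Rabs_mult, (Rabs_pos_eq t), (Rabs_pos_eq (1-t)) by lra.
destruct (Req_dec t 1). subst. nra. nra.
Qed.

Lemma lin_lt s t e k1 k2 : 0 < e -> 0 <= k1 -> 0 <= k2 ->
  Rabs (s - t) < e / (1 + k1 + k2) -> Rabs ((s - t) * k1) < e.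
Proof.
intros he h1 h2 h. rewrite Rabs_mult, (Rabs_pos_eq k1) by lra.
assert (q : 0 < 1 + k1 + k2) by lra.
apply Rmult_lt_compat_r with (r := 1+k1+k2) in h; auto.
unfold Rdiv in h. rewrite Rmult_assoc, Rinv_l in h by lra.
pose proof (Rabs_pos (s-t)). nra.
Qed.

Lemma ball_conn (c : C) r : Cconnected (B c r).
Proof.
intros U V HU HV Hcov Hdis [a [Ba Ua]] [b [Bb Vb]].
set (g := fun t : R => (fst a + t * (fst b - fst a), snd a + t * (snd b - snd a)) : C).
assert (g0 : g 0 = a). { unfold g. destruct a; simpl; f_equal; ring. }
assert (g1 : g 1 = b). { unfold g. destruct a, b; simpl; f_equal; ring. }
assert (gB : forall t, 0<=t<=1 -> B c r (g t)).
{ intros t ht. destruct (proj1 (Bdef _ _ _) Ba) as [a1 a2]. destruct (proj1 (Bdef _ _ _) Bb) as [b1 b2].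
  apply Bdef. unfold g; simpl. split.
  - replace (fst a + t * (fst b - fst a) - fst c) with ((1-t)*(fst a - fst c) + t*(fst b - fst c)) by ring.
    apply conv_lt; auto.
  - replace (snd a + t * (snd b - snd a) - snd c) with ((1-t)*(snd a - snd c) + t*(snd b - snd c)) by ring.
    apply conv_lt; auto. }
assert (gc : forall t (eps : posreal), exists d, 0 < d /\ forall s, Rabs (s - t) < d -> B (g t) eps (g s)).
{ intros t eps. exists (eps / (1 + Rabs (fst b - fst a) + Rabs (snd b - snd a))).
  split. { apply Rdiv_lt_0_compat. apply cond_pos. pose proof (Rabs_pos (fst b - fst a)); pose proof (Rabs_pos (snd b - snd a)); lra. }
  intros s hs. apply Bdef. unfold g; simpl. split.
  - replace (fst a + s * (fst b - fst a) - (fst a + t * (fst b - fst a))) with ((s-t)*Rabs (fst b - fst a) * (if Rle_dec 0 (fst b - fst a) then 1 else -1)).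
    2:{ destruct Rle_dec. rewrite Rabs_pos_eq by lra; ring. rewrite Rabs_left by lra; ring. }
    rewrite Rabs_mult. destruct Rle_dec; rewrite ?Rabs_R1, ?Rabs_m1, Rmult_1_r;
    apply lin_lt with (k2 := Rabs (snd b - snd a)); auto using Rabs_pos, cond_pos.
  - replace (snd a + s * (snd b - snd a) - (snd a + t * (snd b - snd a))) with ((s-t)*Rabs (snd b - snd a) * (if Rle_dec 0 (snd b - snd a) then 1 else -1)).
    2:{ destruct Rle_dec. rewrite Rabs_pos_eq by lra; ring. rewrite Rabs_left by lra; ring. }
    rewrite Rabs_mult. destruct Rle_dec; rewrite ?Rabs_R1, ?Rabs_m1, Rmult_1_r;
    apply lin_lt with (k2 := Rabs (fst b - fst a)); auto using Rabs_pos, cond_pos;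
    replace (1 + Rabs (snd b - snd a) + Rabs (fst b - fst a)) with (1 + Rabs (fst b - fst a) + Rabs (snd b - snd a)) by ring; auto. }
apply (R_conn (fun t => U (g t)) (fun t => V (g t))).
- intros t ht. apply Hcov, gB, ht.
- intros t ht. apply Hdis, gB, ht.
- intros t _ Ut. destruct (HU _ Ut) as [eps He]. destruct (gc t eps) as [d [dp Hd]].
  exists d. split; auto.
- intros t _ Vt. destruct (HV _ Vt) as [eps He]. destruct (gc t eps) as [d [dp Hd]].
  exists d. split; auto.
- rewrite g0; auto.
- rewrite g1; auto.
Qed.

Lemma union_conn (S T : C -> Prop) : Cconnected S -> Cconnected T -> (exists z, S z /\ T z) ->
  Cconnected (fun z => S z \/ T z).
Proof.
intros HS HT [w [Sw Tw]] U V HU HV Hcov Hdis [u [Su Uu]] [v [Sv Vv]].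
destruct (Hcov w (or_introl Sw)) as [Uw|Vw].
- assert (nS : forall z, S z -> V z -> False).
  { intros z Sz Vz. apply (HS U V HU HV); eauto. }
  assert (nT : forall z, T z -> V z -> False).
  { intros z Tz Vz. apply (HT U V HU HV); eauto. }
  destruct Sv; eauto.
- assert (nS : forall z, S z -> U z -> False).
  { intros z Sz Uz. apply (HS U V HU HV); eauto. }
  assert (nT : forall z, T z -> U z -> False).
  { intros z Tz Uz. apply (HT U V HU HV); eauto. }
  destruct Su; eauto.
Qed.

Lemma single_conn (x : C) : Cconnected (fun z => z = x).
Proof.
intros U V _ _ _ Hdis [u [e1 Uu]] [v [e2 Vv]]. subst. eauto.
Qed.

Lemma B_eq (p k : C) : (forall e : posreal, B p e k) -> p = k.
Proof.
intros H. destruct p as [p1 p2], k as [k1 k2].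
assert (forall e, 0 < e -> Rabs (k1 - p1) < e /\ Rabs (k2 - p2) < e).
{ intros e he. exact (proj1 (Bdef _ _ _) (H (mkposreal e he))). }
assert (k1 - p1 = 0).
{ destruct (Req_dec (k1 - p1) 0); auto. exfalso. pose proof (Rabs_pos_lt _ H1).
  destruct (H0 _ H2). lra. }
assert (k2 - p2 = 0).
{ destruct (Req_dec (k2 - p2) 0); auto. exfalso. pose proof (Rabs_pos_lt _ H2).
  destruct (H0 _ H3). lra. }
f_equal; lra.
Qed.

Fixpoint lmin (l : list posreal) : posreal :=
  match l with nil => mkposreal 1 Rlt_0_1 | cons e l' => mkposreal (Rmin e (lmin l')) (Rmin_pos _ _ (cond_pos e) (cond_pos (lmin l'))) end.
Lemma lmin_le l e : In e l -> lmin l <= e.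
Proof. induction l; simpl; [tauto|]; intros [h|h]. subst. apply Rmin_l. eapply Rle_trans. apply Rmin_r. auto. Qed.

Lemma compact_closed (K : C -> Prop) : Ccompact K ->
  forall p, ~ K p -> exists e : posreal, forall y, B p e y -> ~ K y.
Proof.
intros HK p np.
destruct (HK posreal (fun e => intr (fun y => ~ B p e y)) (fun e => intr_open _)) as [l Hl].
{ intros k Kk. destruct (classic (forall e : posreal, B p e k)) as [h|h].
  - apply B_eq in h. subst. tauto.
  - apply not_all_ex_not in h. destruct h as [e he].
    exists (pos_div_2 e). exists (pos_div_2 e). intros y Hy Hp.
    apply he. eapply B_mono; [|eapply B_tri; [exact Hp| apply B_sym; exact Hy]]. simpl; lra. }
exists (lmin l). intros y Hy Ky. destruct (Hl y Ky) as [e [Ine [d Hd]]].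
apply (Hd y (B_center _ _)). eapply B_mono; [|exact Hy]. apply lmin_le; auto.
Qed.

Fixpoint lmax (l : list R) : R := match l with nil => 0 | cons r l' => Rmax r (lmax l') end.
Lemma lmax_le l r : In r l -> r <= lmax l.
Proof. induction l; simpl; [tauto|]; intros [h|h]. subst. apply Rmax_l. eapply Rle_trans. auto. apply Rmax_r. Qed.

Lemma Cmod_le_abs (z : C) : Cmod z <= Rabs (fst z) + Rabs (snd z).
Proof.
destruct z as [x y]. unfold Cmod; simpl.
rewrite <- (sqrt_Rsqr (Rabs x + Rabs y)) by (pose proof (Rabs_pos x); pose proof (Rabs_pos y); lra).
apply sqrt_le_1_alt. unfold Rsqr.
pose proof (Rabs_pos x); pose proof (Rabs_pos y).
rewrite !Rmult_1_r.
assert (hx : x*x = Rabs x * Rabs x) by (rewrite <- Rabs_mult; rewrite Rabs_pos_eq; nra).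
assert (hy : y*y = Rabs y * Rabs y) by (rewrite <- Rabs_mult; rewrite Rabs_pos_eq; nra).
rewrite hx, hy. nra.
Qed.

Lemma compact_bounded (K : C -> Prop) : Ccompact K -> Cbounded K.
Proof.
intros HK.
destruct (HK R (fun r => intr (fun z => Rabs (fst z) < r /\ Rabs (snd z) < r)) (fun r => intr_open _)) as [l Hl].
{ intros k _. exists (Rabs (fst k) + Rabs (snd k) + 1). exists (mkposreal 1 Rlt_0_1).
  intros y Hy. destruct (proj1 (Bdef _ _ _) Hy) as [h1 h2]. simpl in h1, h2.
  pose proof (Rabs_pos (fst k)); pose proof (Rabs_pos (snd k)).
  pose proof (Rabs_triang_inv (fst y) (fst k)). pose proof (Rabs_triang_inv (snd y) (snd k)).
  split; lra. }
exists (2 * lmax l). intros z Kz. destruct (Hl z Kz) as [r [Inr [d Hd]]].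
destruct (Hd z (B_center _ _)). pose proof (lmax_le _ _ Inr). pose proof (Cmod_le_abs z). lra.
Qed.

Lemma image_compact (phi : C -> C) (K U : C -> Prop) : Ccompact K -> Copen U -> (forall z, K z -> U z) ->
  (forall z, U z -> forall eps:posreal, exists d:posreal, forall y, B z d y -> B (phi z) eps (phi y)) ->
  Ccompact (image phi K).
Proof.
intros HK HU KU Hc I W HW Hcov.
destruct (HK I (fun i z => U z /\ W i (phi z))) as [l Hl].
{ intros i z [Uz Wz]. destruct (HU z Uz) as [d1 H1]. destruct (HW i _ Wz) as [e He].
  destruct (Hc z Uz e) as [d2 H2]. exists (mkposreal _ (Rmin_pos _ _ (cond_pos d1) (cond_pos d2))).
  intros y Hy. split. apply H1. eapply B_mono; [|exact Hy]. apply Rmin_l.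
  apply He, H2. eapply B_mono; [|exact Hy]. apply Rmin_r. }
{ intros z Kz. destruct (Hcov (phi z)) as [i Hi]. exists z; auto. exists i; auto. }
exists l. intros w [z [Kz ->]]. destruct (Hl z Kz) as [i [Ini [_ Wi]]]. eauto.
Qed.

Lemma comp_grow A x y (S : C -> Prop) : component A x y -> Cconnected S -> (forall z, S z -> A z) -> S y ->
  forall v, S v -> component A x v.
Proof.
intros [S0 [c0 [sub0 [S0x S0y]]]] cS subS Sy v Sv.
exists (fun z => S0 z \/ S z). split. apply union_conn; eauto.
split. intros z [h|h]; auto. auto.
Qed.

Lemma comp_in A x y : component A x y -> A y.
Proof. intros [S [_ [sub [_ Sy]]]]. auto. Qed.

Lemma comp_refl (A : C -> Prop) x : A x -> component A x x.
Proof. intros Ax. exists (fun z => z = x). split. apply single_conn. split. intros z ->; auto. auto. Qed.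

Theorem mainTheorem3 (G Omega K K' : C -> Prop) (phi : C -> C) :
  Cdomain G -> Cdomain Omega ->
  Ccompact K -> Ccompact K' ->
  (forall z, K z -> K' z) -> (forall z, K' z -> G z) ->
  (forall z, G z -> Omega (phi z)) ->
  (exists U : C -> Prop, Copen U /\ (forall z, K' z -> U z) /\
     (forall z, U z -> G z) /\ holomorphic_on phi U /\ injective_on phi U) ->
  Oconvex G K -> Oconvex Omega (image phi K') ->
  Oconvex Omega (image phi K).
Proof.
intros HG HO HK HK' KK' K'G phiO [U [HU [K'U [UG [Hhol Hinj]]]]] [_ [_ convK]] [cK' [_ convK']].
assert (Hc : forall z, U z -> forall eps:posreal, exists d:posreal, forall y, B z d y -> B (phi z) eps (phi y)).
{ intros z Uz. destruct (Hhol z Uz) as [l hl]. apply cont. exists l; exact hl. }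
assert (cF : Ccompact (image phi K)).
{ apply (image_compact phi K U); auto. }
split; [exact cF|]. split.
{ intros w [z [Kz ->]]. auto. }
set (F := image phi K). set (F' := image phi K').
assert (FF' : forall w, F w -> F' w). { intros w [z [Kz ->]]. exists z; auto. }
assert (clF := compact_closed F cF).
intros H [[x [nFx Hx]] Hbd].
assert (Hopen : forall h, H h -> exists e:posreal, forall y, B h e y -> H y).
{ intros h Hh. pose proof (proj1 (Hx h) Hh) as ch. destruct (clF h (comp_in _ _ _ ch)) as [e He].
  exists e. intros y Hy. apply Hx. apply (comp_grow _ _ _ (B h e) ch (ball_conn _ _) He (B_center _ _) _ Hy). }
destruct (classic (exists y, H y /\ ~ F' y)) as [[y [Hy nF'y]]|hn].
- set (H' := component (fun z => ~ F' z) y).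
  assert (H'H : forall v, H' v -> H v).
  { intros v [S [cS [subS [Sy Sv]]]]. apply Hx.
    apply (comp_grow _ _ _ S (proj1 (Hx y) Hy) cS); auto.
    intros z Sz Fz. apply (subS z Sz). auto. }
  destruct (convK' H') as [w [H'w nOw]].
  { split. exists y. split; auto. unfold H'; tauto.
    destruct Hbd as [M HM]. exists M. intros z Hz. auto. }
  exists w. auto.
- exfalso.
  assert (HF' : forall y, H y -> F' y).
  { intros y Hy. apply NNPP. intros n. apply hn. eauto. }
  assert (Hxx : H x) by (apply Hx; apply comp_refl; auto).
  destruct (HF' x Hxx) as [z0 [K'z0 ex]].
  set (W := fun z => U z /\ H (phi z)).
  assert (hWK' : forall z, W z -> K' z).
  { intros z [Uz Hz]. destruct (HF' _ Hz) as [k [K'k e]].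
    rewrite (Hinj z k Uz (K'U k K'k) e). auto. }
  assert (hWnK : forall z, W z -> K z -> False).
  { intros z [Uz Hz] Kz. apply (comp_in _ _ _ (proj1 (Hx _) Hz)). exists z; auto. }
  assert (Wopen : Copen W).
  { intros z [Uz Hz]. destruct (HU z Uz) as [d1 H1]. destruct (Hopen _ Hz) as [e He].
    destruct (Hc z Uz e) as [d2 H2]. exists (mkposreal _ (Rmin_pos _ _ (cond_pos d1) (cond_pos d2))).
    intros y Hy. split. apply H1. eapply B_mono; [|exact Hy]. apply Rmin_l.
    apply He, H2. eapply B_mono; [|exact Hy]. apply Rmin_r. }
  assert (hbd : forall p, ~ W p -> (forall e:posreal, exists z, W z /\ B p e z) -> K p).
  { intros p nWp Hcl.
    assert (K'p : K' p).
    { apply NNPP. intros nK'. destruct (compact_closed K' HK' p nK') as [e He].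
      destruct (Hcl e) as [z [Wz Bz]]. apply (He z Bz). auto. }
    assert (Up := K'U p K'p).
    destruct (classic (F (phi p))) as [[k [Kk e]]|nF].
    - rewrite (Hinj p k Up (K'U k (KK' k Kk)) e). auto.
    - exfalso. destruct (clF _ nF) as [e He]. destruct (Hc p Up e) as [d Hd].
      destruct (Hcl d) as [z [[Uz Hz] Bz]].
      apply nWp. split; auto. apply Hx.
      apply (comp_grow _ _ _ (B (phi p) e) (proj1 (Hx _) Hz) (ball_conn _ _) He); auto.
      apply B_center. }
  assert (Wz0 : W z0). { split. auto. rewrite <- ex. auto. }
  set (Hz := component (fun z => ~ K z) z0).
  assert (Hsub : forall v, Hz v -> W v).
  { intros v [S [cS [subS [Sz0 Sv]]]]. apply NNPP. intros nWv.
    set (Bs := intr (fun y => ~ W y)).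
    assert (cov : forall s, S s -> W s \/ Bs s).
    { intros s Ss. destruct (classic (W s)) as [h|nW]; auto. right.
      apply NNPP. intros nB. apply (subS s Ss). apply hbd; auto.
      intros e. apply NNPP. intros ne. apply nB. exists e. intros t Bt Wt. apply ne. eauto. }
    apply (cS W Bs Wopen (intr_open _) cov).
    - intros s _ Ws [d Hd]. apply (Hd s (B_center _ _)). auto.
    - eauto.
    - exists v. split; auto. destruct (cov v Sv); tauto. }
  destruct (convK Hz) as [w [Hzw nGw]].
  { split. exists z0. split. intros Kz0. eauto. unfold Hz; tauto.
    destruct (compact_bounded K' HK') as [M HM]. exists M. intros v Hv. auto. }
  apply nGw. auto.
Qed.
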